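(* Let $A, B \in U(2)$ with $\det(A)\det(B) = 1$, and let $G(A,B)$ be the corresponding parity-preserving two-qubit unitary. Then there exist real numbers $\tau_1,\tau_2,\tau_3,\tau_4,a,b,c$ such that $$G(A,B) = G\bigl(R_z(\tau_1), R_z(\tau_2)\bigr)\, e^{\,i(a\, X\otimes X + b\, Y\otimes Y + c\, Z\otimes Z)}\, G\bigl(R_z(\tau_3), R_z(\tau_4)\bigr).$$
   Context: For $2\times 2$ matrices $A=(A_{ij})$ and $B=(B_{ij})$, $G(A,B)$ denotes the $4\times 4$ matrix, in the computational basis $\{|00\rangle,|01\rangle,|10\rangle,|11\rangle\}$ of two qubits, given by $$G(A,B)=\begin{pmatrix} A_{11}&0&0&A_{12}\\ 0&B_{11}&B_{12}&0\\ 0&B_{21}&B_{22}&0\\ A_{21}&0&0&A_{22}\end{pmatrix},$$ i.e. $A$ acts on the even-parity subspace spanned by $|00\rangle,|11\rangle$ and $B$ on the odd-parity subspace spanned by $|01\rangle,|10\rangle$. A parity-preserving (P.P.) unitary is a unitary of this form (so $A,B$ are unitary). $X,Y,Z$ are the Pauli matrices, and $R_z(\theta)=\mathrm{diag}(e^{i\theta},e^{-i\theta})$. *)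

(* Defs.v *)
From HB Require Import structures.
From mathcomp Require Import all_boot all_order all_algebra.
From mathcomp Require Import complex mxtens.
From mathcomp Require Import all_classical all_reals all_analysis.
Set Implicit Arguments. Unset Strict Implicit. Unset Printing Implicit Defensive.
Import Order.TTheory GRing.Theory Num.Theory numFieldNormedType.Exports.
Local Open Scope ring_scope.
Local Open Scope complex_scope.

Section QDefs.
Variable R : realType.
Local Notation C := (R[i]).

Definition expi (t : R) : C := cos t +i* sin t.

Definition expm (n : nat) (M : 'M[C]_n) : 'M[C]_n :=
  \matrix_(j, k) limn ((fun N => (\sum_(m < N) (m`!%:R)^-1 *: M ^+ m) j k)
                        : nat -> (C : numFieldType)).

Definition adjmx (m n : nat) (M : 'M[C]_(m, n)) : 'M[C]_(n, m) := (map_mx conjc M)^T.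
Definition unitary (n : nat) (M : 'M[C]_n) : Prop := M *m adjmx M = 1%:M.

Definition PauliX : 'M[C]_2 := \matrix_(i, j) (if i == j then 0 else 1).
Definition PauliY : 'M[C]_2 :=
  \matrix_(i, j) (if i == j then 0 else if i == ord0 then - (0 +i* 1) else (0 +i* 1)).
Definition PauliZ : 'M[C]_2 :=
  \matrix_(i, j) (if i == j then (if i == ord0 then 1 else -1) else 0).

Definition Rz (t : R) : 'M[C]_2 :=
  \matrix_(i, j) (if i == j then (if i == ord0 then expi t else expi (- t)) else 0).

(* G(A,B) in the basis |00>,|01>,|10>,|11> (indices 0,1,2,3) *)
Definition Gmx (A B : 'M[C]_2) : 'M[C]_(2 * 2) :=
  \matrix_(i, j)
    match nat_of_ord i, nat_of_ord j with
    | 0, 0 => A ord0 ord0    | 0, 3 => A ord0 ord_max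
    | 3, 0 => A ord_max ord0 | 3, 3 => A ord_max ord_max
    | 1, 1 => B ord0 ord0    | 1, 2 => B ord0 ord_max
    | 2, 1 => B ord_max ord0 | 2, 2 => B ord_max ord_max
    | _, _ => 0
    end.

End QDefs.

(* Main.v *)
Require Import Defs.
From HB Require Import structures.
From mathcomp Require Import all_boot all_order all_algebra.
From mathcomp Require Import complex mxtens.
From mathcomp Require Import all_classical all_reals all_analysis.
From mathcomp Require Import ring lra.
Import Order.TTheory GRing.Theory Num.Theory numFieldNormedType.Exports.
Local Open Scope ring_scope.
Local Open Scope complex_scope.
Local Open Scope classical_set_scope.

Section S.
Variable R : realType.
Local Notation C := (R[i]).
Local Notation CT := (Num.NumField.sort (R[i] : numFieldType)).

Lemma sum2 (F : 'I_2 -> C) : \sum_(k < 2) F k = F ord0 + F ord_max.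
Proof.
rewrite !big_ord_recr big_ord0 /= add0r; congr (F _ + _); exact: val_inj.
Qed.

Lemma Gmx_mul (A B A' B' : 'M[C]_2) :
  Gmx A B *m Gmx A' B' = Gmx (A *m A') (B *m B').
Proof.
apply/matrixP => i j; rewrite [LHS]mxE (big_ord_recr 3) !big_ord_recr /= big_ord0 !mxE.
case: i => [[|[|[|[|i]]]] Hi] //=; case: j => [[|[|[|[|j]]]] Hj] //=.
all: rewrite ?mxE ?sum2 /=.
all: try ring.
Qed.

Lemma Gmx1 : Gmx (1 : 'M[C]_2) 1 = 1.
Proof.
apply/matrixP => i j; rewrite [RHS]mxE.
case: i => [[|[|[|[|i]]]] Hi] //=; case: j => [[|[|[|[|j]]]] Hj] //=.
all: by rewrite ?mxE.
Qed.

Lemma Gmx_pow (A B : 'M[C]_2) m : Gmx A B ^+ m = Gmx (A ^+ m) (B ^+ m).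
Proof.
elim: m => [|m IH]; first by rewrite !expr0 Gmx1.
by rewrite !exprS IH -!mulmxE Gmx_mul.
Qed.

Definition D (x y : C) : 'M[C]_2 :=
  \matrix_(i, j) if i == j then (x + y) / 2 else (x - y) / 2.

Lemma D_mul x y x' y' : D x y *m D x' y' = D (x * x') (y * y').
Proof.
have h2 : (2 : C) != 0 by rewrite pnatr_eq0.
apply/matrixP => i j; rewrite !mxE sum2 !mxE.
case: i => [[|[|i]] Hi] //=; case: j => [[|[|j]] Hj] //=.
all: by field.
Qed.

Lemma D1 : D 1 1 = 1.
Proof.
have h2 : (2 : C) != 0 by rewrite pnatr_eq0.
apply/matrixP => i j; rewrite !mxE.
case: i => [[|[|i]] Hi] //=; case: j => [[|[|j]] Hj] //=.
all: by field.
Qed.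

Lemma D_pow x y m : D x y ^+ m = D (x ^+ m) (y ^+ m).
Proof.
elim: m => [|m IH]; first by rewrite !expr0 D1.
by rewrite !exprS IH -!mulmxE D_mul.
Qed.

Definition K (x1 y1 x2 y2 : C) : 'M[C]_(2 * 2) := Gmx (D x1 y1) (D x2 y2).

Lemma K_lin a b c d : K a b c d =
  a *: K 1 0 0 0 + b *: K 0 1 0 0 + c *: K 0 0 1 0 + d *: K 0 0 0 1.
Proof.
have h2 : (2 : C) != 0 by rewrite pnatr_eq0.
apply/matrixP => i j; rewrite !mxE.
case: i => [[|[|[|[|i]]]] Hi] //=; case: j => [[|[|[|[|j]]]] Hj] //=.
all: rewrite ?mxE /=.
all: by field.
Qed.

Lemma K_pow a b c d m : K a b c d ^+ m = K (a ^+ m) (b ^+ m) (c ^+ m) (d ^+ m).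
Proof. by rewrite /K Gmx_pow !D_pow. Qed.

Definition E (N : nat) (x : C) := \sum_(m < N) (m`!%:R)^-1 * x ^+ m.

Lemma K_psum a b c d N :
  \sum_(m < N) (m`!%:R)^-1 *: K a b c d ^+ m = K (E N a) (E N b) (E N c) (E N d).
Proof.
under eq_bigr => m _ do rewrite K_pow K_lin !scalerDr !scalerA.
rewrite !big_split /= -!scaler_suml [RHS]K_lin.
by rewrite /E; congr (_ *: _ + _ *: _ + _ *: _ + _ *: _); apply: eq_bigr => m _; rewrite mulrC.
Qed.

Lemma expm_K a b c d (ea eb ec ed : CT) :
  (fun N => E N a : CT) @ \oo --> ea ->
  (fun N => E N b : CT) @ \oo --> eb ->
  (fun N => E N c : CT) @ \oo --> ec ->
  (fun N => E N d : CT) @ \oo --> ed ->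
  expm (K a b c d) = K ea eb ec ed.
Proof.
move=> ha hb hc hd; apply/matrixP => j k; rewrite mxE.
under eq_fun => N do rewrite K_psum K_lin.
rewrite (K_lin ea).
move: (K 1 0 0 0) (K 0 1 0 0) (K 0 0 1 0) (K 0 0 0 1) => K1 K2 K3 K4.
rewrite !mxE.
under eq_fun => N do rewrite !mxE.
have H : (fun x => E x a * K1 j k + E x b * K2 j k + E x c * K3 j k + E x d * K4 j k : CT) @ \oo --> (ea * K1 j k + eb * K2 j k + ec * K3 j k + ed * K4 j k : CT).
  apply: cvgD; [apply: cvgD; [apply: cvgD|]|]; apply: cvgMl => //.
exact: (cvg_lim (@norm_hausdorff _ _) H).
Qed.
Lemma normC_real (r : R) : `|r%:C| = `|r|%:C :> C.
Proof. by rewrite normc_def /= expr0n addr0 sqrtr_sqr. Qed.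

Lemma cvg_realC (u : nat -> R) (x : R) :
  u @ \oo --> x -> (fun n => (u n)%:C : CT) @ \oo --> (x%:C : CT).
Proof.
move=> hu; apply/cvgrPdist_lt => e e0.
move: e0; rewrite ltcE => /andP[/eqP eI e0'].
move: hu => /cvgrPdist_lt /(_ (complex.Re e) e0').
apply: filterS => n hn.
rewrite -rmorphB normC_real ltcE /= eI eqxx /=; exact: hn.
Qed.

Lemma ipow_even k : ('i : C) ^+ k.*2 = ((-1) ^+ k)%:C.
Proof. by rewrite -mul2n exprM sqr_i rmorphXn rmorphN1. Qed.

Lemma ipow_odd k : ('i : C) ^+ k.*2.+1 = 'i * ((-1) ^+ k)%:C.
Proof. by rewrite exprS ipow_even. Qed.

Lemma term t m : (m`!%:R)^-1 * ('i * t%:C) ^+ m =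
  (cos_coeff t m)%:C + 'i * (sin_coeff t m)%:C :> C.
Proof.
rewrite /cos_coeff /sin_coeff /= exprMn.
have := odd_double_half m; case: (odd m) => /= hm; rewrite -hm;
  move: (m./2) => k {hm}.
- rewrite add1n ipow_odd /= uphalf_double.
  rewrite !(rmorphM, rmorphXn, fmorphV, rmorph_nat, rmorphN1) /=.
  rewrite doubleK; field.
  by rewrite pnatr_eq0 -lt0n fact_gt0.
- have -> : (false + k.*2)%N = k.*2 by [].
  rewrite ipow_even doubleK.
  rewrite !(rmorphM, rmorphXn, fmorphV, rmorph_nat, rmorphN1) /=.
  field.
  by rewrite pnatr_eq0 -lt0n fact_gt0.
Qed.

Lemma E_series t N : E N ('i * t%:C) =
  (series (cos_coeff t) N)%:C + 'i * (series (sin_coeff t) N)%:C.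
Proof.
rewrite /E /series /=.
under eq_bigr do rewrite term.
by rewrite big_split /= -mulr_sumr -!rmorph_sum !big_mkord.
Qed.

Lemma cvg_expi t : (fun N => E N ('i * t%:C) : CT) @ \oo --> (expi t : CT).
Proof.
under eq_fun do rewrite E_series.
have -> : (expi t : CT) = (cos t)%:C + 'i * (sin t)%:C.
  by rewrite /expi; apply/eqP; rewrite eq_complex /= ?mul0r ?mul1r ?mulr0 ?subr0 ?add0r ?addr0 ?eqxx.
apply: cvgD; [|apply: cvgM; [exact: cvg_cst|]]; apply: cvg_realC.
- rewrite cos.unlock; exact: is_cvg_series_cos_coeff.
- rewrite sin.unlock; exact: is_cvg_series_sin_coeff.
Qed.
Lemma H_K (a b c : R) :
  (0 +i* 1) *: (a%:C *: (PauliX R *t PauliX R)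
                      + b%:C *: (PauliY R *t PauliY R)
                      + c%:C *: (PauliZ R *t PauliZ R)) =
  K ((0 +i* 1) * (c + a - b)%:C) ((0 +i* 1) * (c - a + b)%:C) ((0 +i* 1) * (- c + a + b)%:C) ((0 +i* 1) * (- c - a - b)%:C).
Proof.
have h2 : (2 : C) != 0 by rewrite pnatr_eq0.
rewrite /PauliX /PauliY /PauliZ.
set I := (0 +i* 1 : C).
have hI : I * I = -1 by rewrite -expr2; exact: sqr_i.
apply/matrixP => i j; rewrite !mxE.
case: i => [[|[|[|[|i]]]] Hi] //=; case: j => [[|[|[|[|j]]]] Hj] //=.
all: rewrite ?mxE /= ?(mul0r, mulr0, mul1r, mulr1, mulN1r, mulrN1, mulNr, mulrN, opprK).
all: rewrite ?hI ?(rmorphD, rmorphB, rmorphN) /=.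
all: by field.
Qed.

Lemma polar_gen (x y r : R) : 0 <= r -> r ^+ 2 = x ^+ 2 + y ^+ 2 ->
  exists t : R, x = r * cos t /\ y = r * sin t.
Proof.
move=> r0 hr2.
have [r00|rn0] := eqVneq r 0.
  exists 0; rewrite r00 !mul0r; move: hr2; rewrite r00 expr0n /= => h.
  by split; nra.
have rp : 0 < r by rewrite lt0r rn0.
pose c := x / r.
have hxc : x = r * c by rewrite /c mulrC divfK.
have hc : -1 <= c <= 1.
  have : x ^+ 2 <= r ^+ 2 by rewrite hr2 lerDl sqr_ge0.
  rewrite hxc exprMn -{2}(mulr1 (r ^+ 2)) ler_pM2l ?exprn_gt0 // => h.
  apply/andP; split; nra.
have hs : Num.sqrt (1 - c ^+ 2) = `|y| / r.
  have -> : 1 - c ^+ 2 = (y / r) ^+ 2.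
    have hy2 : y ^+ 2 = r ^+ 2 - x ^+ 2 by rewrite hr2; ring.
    by rewrite /c !exprMn hy2; field.
  by rewrite sqrtr_sqr normrM normfV (gtr0_norm rp).
exists (if 0 <= y then acos c else - acos c); split.
  by case: ifP => _; rewrite ?cosN acosK // ?in_itv /= hxc.
case: ifP => hy.
  by rewrite sin_acos // hs ger0_norm // mulrC divfK.
by rewrite sinN sin_acos // hs ltr0_norm ?ltNge ?hy // mulrN mulrC divfK // opprK.
Qed.
Lemma expiD (x y : R) : expi (x + y) = expi x * expi y.
Proof.
rewrite /expi cosD sinD; apply/eqP; rewrite eq_complex /=; apply/andP; split; apply/eqP; ring.
Qed.

Lemma conj_expi (x : R) : conjc (expi x) = expi (- x).
Proof. by rewrite /expi cosN sinN. Qed.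

Lemma expi_addN (x : R) : expi x + expi (- x) = (cos x + cos x)%:C.
Proof.
rewrite /expi cosN sinN; apply/eqP; rewrite eq_complex /=; apply/andP; split; apply/eqP; ring.
Qed.

Lemma expi_subN (x : R) : expi x - expi (- x) = (0 +i* 1) * (sin x + sin x)%:C.
Proof.
rewrite /expi cosN sinN; apply/eqP; rewrite eq_complex /=; apply/andP; split; apply/eqP; ring.
Qed.

Lemma expi_mpihalf : expi (- (pi / 2)) = - (0 +i* 1) :> C.
Proof. by rewrite /expi cosN sinN cos_pihalf sin_pihalf; apply/eqP; rewrite eq_complex /= ?oppr0 ?eqxx. Qed.

Lemma cosexp (th al : R) : (cos th)%:C * expi al = (expi (al + th) + expi (al - th)) / 2.
Proof.
have h2 : (2 : C) != 0 by rewrite pnatr_eq0.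
rewrite !expiD -mulrDr expi_addN rmorphD /=; by field.
Qed.

Lemma sinexp (th be : R) : (sin th)%:C * expi be =
  (expi (be - pi / 2 + th) - expi (be - pi / 2 - th)) / 2.
Proof.
have h2 : (2 : C) != 0 by rewrite pnatr_eq0.
set I := (0 +i* 1 : C).
have hI : I * I = -1 by rewrite -expr2; exact: sqr_i.
rewrite !expiD -mulrBr expi_subN expi_mpihalf rmorphD /=.
rewrite -/I.
have -> : expi be * - I * (I * ((sin th)%:C + (sin th)%:C)) / 2 =
  - (I * I) * expi be * ((sin th)%:C + (sin th)%:C) / 2 by ring.
rewrite hI opprK mul1r; by field.
Qed.
Lemma polarC (z : C) : exists (r th : R),
  0 <= r /\ z = r%:C * expi th /\ z * conjc z = (r ^+ 2)%:C.
Proof.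
case: z => x y.
have r0 : 0 <= Num.sqrt (x ^+ 2 + y ^+ 2) by exact: sqrtr_ge0.
have hr2 : Num.sqrt (x ^+ 2 + y ^+ 2) ^+ 2 = x ^+ 2 + y ^+ 2.
  by rewrite sqr_sqrtr // addr_ge0 // sqr_ge0.
move: (Num.sqrt _) r0 hr2 => r r0 hr2.
have [th [hx hy]] := polar_gen _ _ _ r0 hr2.
exists r, th; split => //; split.
  apply/eqP; rewrite eq_complex /=; apply/andP; split; apply/eqP.
    by rewrite mul0r subr0.
  by rewrite mul0r addr0.
rewrite hr2; apply/eqP; rewrite eq_complex /=; apply/andP; split; apply/eqP; ring.
Qed.

Lemma det2 (P : 'M[C]_2) :
  \det P = P ord0 ord0 * P ord_max ord_max - P ord0 ord_max * P ord_max ord0.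
Proof.
rewrite (expand_det_row _ ord0) sum2 /cofactor !det_mx11 !mxE /=.
have -> : lift ord0 (0 : 'I_1) = ord_max :> 'I_2 by apply: val_inj.
have -> : lift ord_max (0 : 'I_1) = ord0 :> 'I_2 by apply: val_inj.
rewrite addn0 addn1 expr0 expr1; ring.
Qed.
Lemma unitary_struct (P : 'M[C]_2) : unitary P ->
  [/\ P ord0 ord0 * (conjc (P ord0 ord0)) + P ord0 ord_max * (conjc (P ord0 ord_max)) = 1,
      P ord_max ord0 = - (\det P * (conjc (P ord0 ord_max))),
      P ord_max ord_max = \det P * (conjc (P ord0 ord0)) &
      \det P * (conjc (\det P)) = 1].
Proof.
rewrite /unitary /adjmx => h.
have e (i j : 'I_2) := congr1 (fun M : 'M[C]_2 => M i j) h.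
have h1 := e ord0 ord0; have h2 := e ord_max ord_max; have h3 := e ord0 ord_max.
move: h1 h2 h3; rewrite !mxE !sum2 !mxE /=.
rewrite det2.
move: (P ord0 ord0) (P ord0 ord_max) (P ord_max ord0) (P ord_max ord_max) => p q r s.
rewrite !mulr1n => h1 h2 h3.
have h3' : p^* * r + q^* * s = 0.
  have := congr1 conjc h3; rewrite rmorphD !rmorphM /= !conjcK => H; apply: etrans H _; by rewrite oppr0.
have hs : s = (p * s - q * r) * p^*.
  apply/eqP; rewrite eq_sym -subr_eq0; apply/eqP.
  have -> : (p * s - q * r) * p^* - s = s * (p * p^* + q * q^* - 1) - q * (p^* * r + q^* * s) by ring.
  by rewrite h1 h3' subrr mulr0 mulr0 subr0.
have hr : r = - ((p * s - q * r) * q^*).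
  apply/eqP; rewrite eq_sym -subr_eq0; apply/eqP.
  have -> : - ((p * s - q * r) * q^*) - r = r * (p * p^* + q * q^* - 1) - p * (p^* * r + q^* * s) by ring.
  by rewrite h1 h3' subrr mulr0 mulr0 subr0.
split => //.
set d := p * s - q * r in hr hs *.
move: h2; rewrite hr hs !rmorphN !rmorphM /= !conjcK => h2.
rewrite -h2 -[LHS]mulr1 -h1; ring.
Qed.
Lemma conjM (a b : C) : conjc (a * b) = conjc a * conjc b.
Proof. by case: a => ? ?; case: b => ? ?; apply/eqP; rewrite eq_complex /=; apply/andP; split; apply/eqP; ring. Qed.
Lemma conjD (a b : C) : conjc (a + b) = conjc a + conjc b.
Proof. by case: a => ? ?; case: b => ? ?; apply/eqP; rewrite eq_complex /=; apply/andP; split; apply/eqP; ring. Qed.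
Lemma conjB (a b : C) : conjc (a - b) = conjc a - conjc b.
Proof. by case: a => ? ?; case: b => ? ?; apply/eqP; rewrite eq_complex /=; apply/andP; split; apply/eqP; ring. Qed.
Lemma o2 (i : 'I_2) : i = ord0 \/ i = ord_max.
Proof. by case: i => [[|[|i]] Hi] //; [left|right]; apply: val_inj. Qed.

Lemma L1 (x y z w : R) : expi x * ((expi y + expi z) / 2) * expi w =
  (expi (x + y + w) + expi (x + z + w)) / 2.
Proof. have h2 : (2 : C) != 0 by rewrite pnatr_eq0. by rewrite !expiD; field. Qed.

Lemma L2 (x y z w : R) : expi x * ((expi y - expi z) / 2) * expi w =
  (expi (x + y + w) - expi (x + z + w)) / 2.
Proof. have h2 : (2 : C) != 0 by rewrite pnatr_eq0. by rewrite !expiD; field. Qed.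

Lemma L3 (d y z : R) : expi d * conjc ((expi y + expi z) / 2) =
  (expi (d - y) + expi (d - z)) / 2.
Proof.
have h2' : (2 : C) != 0 by rewrite pnatr_eq0.
by rewrite conjM conjc_inv conjc_nat conjD !conj_expi !expiD; field.
Qed.

Lemma L4 (d y z : R) : - (expi d * conjc ((expi y - expi z) / 2)) =
  (expi (d - z) - expi (d - y)) / 2.
Proof.
have h2' : (2 : C) != 0 by rewrite pnatr_eq0.
by rewrite conjM conjc_inv conjc_nat conjB !conj_expi !expiD; field.
Qed.

Lemma E2eq (a b a' b' : R) : a = a' -> b = b' ->
  (expi a + expi b) / 2 = (expi a' + expi b') / 2 :> C.
Proof. by move=> -> ->. Qed.

Lemma E2eqm (a b a' b' : R) : a = a' -> b = b' ->
  (expi a - expi b) / 2 = (expi a' - expi b') / 2 :> C.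
Proof. by move=> -> ->. Qed.

Lemma E2eqsw (a b a' b' : R) : a = b' -> b = a' ->
  (expi a + expi b) / 2 = (expi a' + expi b') / 2 :> C.
Proof. by move=> -> ->; rewrite addrC. Qed.

Lemma block (P : 'M[C]_2) (dl : R) : unitary P -> \det P = expi dl ->
  exists th t t' : R, P = Rz t *m D (expi (dl / 2 + th)) (expi (dl / 2 - th)) *m Rz t'.
Proof.
move=> /unitary_struct [h1 hr hs _] hdet; rewrite hdet in hr hs.
have [rp [al [rp0 [hp hpp]]]] := polarC (P ord0 ord0).
have [rq [be [rq0 [hq hqq]]]] := polarC (P ord0 ord_max).
have hrr : rp ^+ 2 + rq ^+ 2 = 1.
  apply: complexI; by rewrite rmorphD /= -hpp -hqq.
have rp1 : -1 <= rp <= 1 by apply/andP; split; nra.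
pose th := acos rp.
have hc : cos th = rp by rewrite /th acosK // in_itv.
have hsn : sin th = rq.
  rewrite /th sin_acos // (_ : 1 - rp ^+ 2 = rq ^+ 2); last by rewrite -hrr; ring.
  by rewrite sqrtr_sqr ger0_norm.
pose g := be - pi / 2.
pose t := (al + g) / 2 - dl / 2.
pose t' := (al - g) / 2.
exists th, t, t'.
have hP0 : P ord0 ord0 = (expi (al + th) + expi (al - th)) / 2 by rewrite hp -hc cosexp.
have hP1 : P ord0 ord_max = (expi (g + th) - expi (g - th)) / 2 by rewrite hq -hsn sinexp.
apply/matrixP => i j.
rewrite !mxE !sum2 !mxE !sum2 !mxE.
case: (o2 i) => ->; case: (o2 j) => ->; rewrite /= ?hr ?hs ?hP0 ?hP1.
all: rewrite ?(mul0r, mulr0, addr0, add0r).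
- by rewrite L1; apply: E2eq; rewrite /t /t'; lra.
- by rewrite L2; apply: E2eqm; rewrite /t /t'; lra.
- by rewrite L4 L2; apply: E2eqm; rewrite /t /t'; lra.
- by rewrite L3 L1; apply: E2eqsw; rewrite /t /t'; lra.
Qed.
Lemma expm_H (a b c : R) :
  expm ((0 +i* 1) *: (a%:C *: (PauliX R *t PauliX R)
                      + b%:C *: (PauliY R *t PauliY R)
                      + c%:C *: (PauliZ R *t PauliZ R))) =
  K (expi (c + a - b)) (expi (c - a + b)) (expi (- c + a + b)) (expi (- c - a - b)).
Proof. by rewrite H_K; apply: expm_K; exact: cvg_expi. Qed.

End S.

Local Close Scope classical_set_scope.

Theorem lemma1 (R : realType) (A B : 'M[R[i]]_2) :
  unitary A -> unitary B -> \det A * \det B = 1 ->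
  exists (t1 t2 t3 t4 a b c : R),
    Gmx A B =
      Gmx (Rz t1) (Rz t2)
      *m expm ((0 +i* 1) *: (a%:C *: (PauliX R *t PauliX R)
                      + b%:C *: (PauliY R *t PauliY R)
                      + c%:C *: (PauliZ R *t PauliZ R)))
      *m Gmx (Rz t3) (Rz t4).
Proof.
move=> hA hB hdet.
have [_ _ _ hdd] := unitary_struct _ _ hA.
have [r [dl [r0 [hd hdr]]]] := polarC _ (\det A).
have r1 : r = 1.
  have : (r ^+ 2)%:C = 1%:C :> R[i] by rewrite -hdr hdd.
  move/complexI => h; nra.
rewrite r1 mul1r in hd.
have hdB : \det B = expi (- dl).
  rewrite -conj_expi -hd -[LHS]mul1r -hdd -mulrA mulrCA hdet mulr1 //.
have [thA [t1 [t3 eA]]] := block _ _ _ hA hd.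
have [thB [t2 [t4 eB]]] := block _ _ _ hB hdB.
exists t1, t2, t3, t4, ((thA + thB) / 2), ((thB - thA) / 2), (dl / 2).
rewrite expm_H /K !Gmx_mul eA eB.
have -> : dl / 2 + (thA + thB) / 2 - (thB - thA) / 2 = dl / 2 + thA by lra.
have -> : dl / 2 - (thA + thB) / 2 + (thB - thA) / 2 = dl / 2 - thA by lra.
have -> : - (dl / 2) + (thA + thB) / 2 + (thB - thA) / 2 = - dl / 2 + thB by lra.
have -> : - (dl / 2) - (thA + thB) / 2 - (thB - thA) / 2 = - dl / 2 - thB by lra.
by [].
Qed.
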